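(* There is no $1$-dimensional freezing cellular automaton $F$ that simulates every $1$-dimensional freezing cellular automaton with neighborhood $\mathrm{VN}_1=\{-1,0,1\}$, even when simulations with arbitrary finite context $C$ are allowed.
   Context: A $d$-dimensional cellular automaton (CA) is $F=(d,Q,N,f)$ with $Q$ finite, $N\subset\mathbb{Z}^d$ finite, $f:Q^N\to Q$, global map $F(c)_z=f(c|_{z+N})$. A CA is freezing if there is a partial order $\preceq$ on $Q$ with $F(c)_z\preceq c_z$ for all $c,z$. Simulation: $F$ simulates $G$ (same dimension $d$) with slowdown $T>0$, rectangular block $B\subseteq\mathbb{Z}^d$ of size-vector $b$ and context $C$ (finite, $\vec0\in C$) if there is $\phi:Q_G^C\to Q_F^B$ such that $\bar\phi(c)_{bz+r}=\phi(c|_{z+C})_r$ ($bz$ componentwise) defines an injective map $\bar\phi$ with $\bar\phi(G(c))=F^T(\bar\phi(c))$ for all $c$. *)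

(* Defs.v *)
From HB Require Import structures.
From mathcomp Require Import all_boot all_order all_algebra.
Set Implicit Arguments. Unset Strict Implicit. Unset Printing Implicit Defensive.
Import Order.TTheory GRing.Theory Num.Theory.
Local Open Scope ring_scope.

Definition nbhd (N : seq int) : Type := {z : int | z \in N}.

Record CA := mkCA {
  st : finType;
  nb : seq int;
  rule : (nbhd nb -> st) -> st
}.

Definition config (F : CA) : Type := int -> st F.

Definition restr (Q : Type) (N : seq int) (c : int -> Q) (z : int) : nbhd N -> Q :=
  fun n => c (z + val n).

Definition global (F : CA) (c : config F) : config F :=
  fun z => rule (@restr (st F) (nb F) c z).

Definition partial_order (Q : Type) (le : Q -> Q -> Prop) : Prop :=
  (forall x, le x x) /\ (forall x y, le x y -> le y x -> x = y) /\
  (forall x y z, le x y -> le y z -> le x z).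

Definition freezing (F : CA) : Prop :=
  exists le : st F -> st F -> Prop, partial_order le /\
    forall (c : config F) (z : int), le (global c z) (c z).

(* Since b > 0 the defining equation
   determines bar_phi uniquely, so we quantify over it existentially. *)
Definition simulates (F G : CA) : Prop :=
  exists (T b : nat) (C : seq int)
         (phi : (nbhd C -> st G) -> 'I_b -> st F)
         (barphi : config G -> config F),
    (0 < T)%N /\ (0 < b)%N /\ (0 : int) \in C /\
    (forall (c : config G) (z : int) (r : 'I_b),
        barphi c (b%:Z * z + (nat_of_ord r)%:Z) = phi (@restr (st G) C c z) r) /\
    injective barphi /\
    (forall c : config G, barphi (@global G c) = iter T (@global F) (barphi c)).

(* Main.v *)
Require Import Defs.
From mathcomp Require Import all_boot all_order all_algebra zify.
From Stdlib Require Import FunctionalExtensionality.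
Set Implicit Arguments. Unset Strict Implicit. Unset Printing Implicit Defensive.
Import Order.TTheory GRing.Theory Num.Theory.
Local Open Scope ring_scope.

Definition O0 : 'I_3 := @Ordinal 3 0 isT.
Definition O1 : 'I_3 := @Ordinal 3 1 isT.
Definition O2 : 'I_3 := @Ordinal 3 2 isT.

Definition fG (l c : 'I_3) : 'I_3 :=
  if c == O1 then O2 else if (l == O1) && (c == O0) then O1 else c.

Definition sig (s z : int) : 'I_3 :=
  if s < z then O0 else if s == z then O1 else O2.

Lemma sigS (s z : int) : sig (s + 1) z = fG (sig s (z + -1)) (sig s (z + 0)).
Proof.
rewrite /sig /fG addr0.
case E1: (s + 1 < z); case E2: (s + 1 == z); case E3: (s < z + -1);
case E4: (s == z + -1); case E5: (s < z); case E6: (s == z) => //; lia.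
Qed.

Definition VN : seq int := [:: -1; 0; 1].
Definition nm1 : nbhd VN := exist _ (-1) isT.
Definition n0 : nbhd VN := exist _ 0 isT.

Definition Gm (m : nat) : CA :=
  @mkCA {ffun 'I_m -> 'I_3} VN
    (fun g => [ffun j => fG (g nm1 j) (g n0 j)]).

Lemma Gm_freezing m : freezing (Gm m).
Proof.
exists (fun a b : {ffun 'I_m -> 'I_3} => forall j, (nat_of_ord (b j) <= a j)%N).
split; [split; [|split]|].
- by move=> x j.
- move=> x y h1 h2; apply/ffunP => j; apply/val_inj/eqP; by rewrite eqn_leq h1 h2.
- move=> x y z h1 h2 j; exact: leq_trans (h2 j) (h1 j).
- move=> c z j; rewrite /global /= ffunE /fG.
  rewrite /restr /= addr0.
  case: eqP => [->|_] //. case: ifP => //. by case/andP => _ /eqP ->.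
Qed.

Definition stx m L (x : {ffun 'I_m -> 'I_L}) (t : nat) : config (Gm m) :=
  fun z => [ffun j => sig (t%:Z - (x j)%:Z) z].

Lemma stxS m L (x : {ffun 'I_m -> 'I_L}) t :
  stx x t.+1 = global (stx x t).
Proof.
apply: functional_extensionality => z.
apply/ffunP => j; rewrite /global /stx /=. rewrite !(@ffunE _ _ (fun j0 => _)).
have -> : (t.+1%:Z - (x j)%:Z) = (t%:Z - (x j)%:Z) + 1 by lia.
exact: sigS.
Qed.

Lemma stx_iter m L (x : {ffun 'I_m -> 'I_L}) t :
  stx x t = iter t (@global (Gm m)) (stx x 0).
Proof. elim: t => // t IH; by rewrite stxS IH. Qed.
Lemma strip (F : CA) (r : nat) (Hr : forall v, v \in nb F -> (`|v| <= r)%N)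
  (p : int) (x y : config F) t :
  (forall q, p <= q -> x q = y q) ->
  (forall s q, (s < t)%N -> p - r%:Z <= q -> q < p ->
      iter s (@global F) x q = iter s (@global F) y q) ->
  forall q, p <= q -> iter t (@global F) x q = iter t (@global F) y q.
Proof.
move=> Hxy; elim: t => [|t IH] Hs q Hq /=; first exact: Hxy.
rewrite /global; congr rule; apply: functional_extensionality => n.
rewrite /restr. case: n => v /= Hv.
have := Hr _ Hv => Hvr.
case: (ltrP (q + v) p) => H.
- apply: Hs => //; lia.
- apply: IH => // s w Hst; apply: Hs; lia.
Qed.

Section Hist.
Variables (P : eqType) (ple : P -> P -> Prop).
Hypotheses (prefl : forall a, ple a a)
  (panti : forall a b, ple a b -> ple b a -> a = b)
  (ptrans : forall a b c, ple a b -> ple b c -> ple a c).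

Lemma mono_le (h : nat -> P) : (forall s, ple (h s.+1) (h s)) ->
  forall s s', (s <= s')%N -> ple (h s') (h s).
Proof.
move=> Hm s s' /subnK <-; elim: (s' - s)%N => [|d IH] //=.
rewrite addSn; exact: ptrans (Hm _) IH.
Qed.

Definition fh (h : nat -> P) N (v : P) : nat := find (fun s => h s == v) (iota 0 N).

Lemma fh_spec (h : nat -> P) N t : (t < N)%N ->
  (fh h N (h t) <= t)%N /\ h (fh h N (h t)) = h t.
Proof.
move=> Ht.
have Hhas : has (fun s => h s == h t) (iota 0 N).
  by apply/hasP; exists t => //; rewrite mem_iota.
have Hlt := Hhas; rewrite has_find size_iota in Hlt.
have := nth_find 0%N Hhas; rewrite nth_iota // add0n => /eqP Heq.
split=> //.
rewrite leqNgt; apply/negP => Hgt.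
have := before_find 0%N Hgt; rewrite nth_iota ?add0n ?eqxx //.
Qed.

Lemma fh_lt (h : nat -> P) N v : (fh h N v < N)%N -> h (fh h N v) = v.
Proof.
move=> Hlt.
have Hhas : has (fun s => h s == v) (iota 0 N) by rewrite has_find size_iota.
by have := nth_find 0%N Hhas; rewrite nth_iota // add0n => /eqP.
Qed.

Lemma hist_det (h1 h2 : nat -> P) N :
  (forall s, ple (h1 s.+1) (h1 s)) -> (forall s, ple (h2 s.+1) (h2 s)) ->
  (forall v, fh h1 N v = fh h2 N v) -> forall t, (t < N)%N -> h1 t = h2 t.
Proof.
move=> m1 m2 E t Ht.
have [s1t h1s1] := fh_spec h1 Ht.
have [s2t h2s2] := fh_spec h2 Ht.
have h2s1 : h2 (fh h1 N (h1 t)) = h1 t.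
  by rewrite E; apply: fh_lt; rewrite -E; exact: leq_ltn_trans s1t Ht.
have h1s2 : h1 (fh h2 N (h2 t)) = h2 t.
  by rewrite -E; apply: fh_lt; rewrite E; exact: leq_ltn_trans s2t Ht.
set s1 := fh h1 N (h1 t) in s1t h1s1 h2s1.
set s2 := fh h2 N (h2 t) in s2t h2s2 h1s2.
case: (leqP s1 s2) => Hs.
- apply: panti.
  + by rewrite -h1s2; apply: mono_le.
  + by rewrite -h1s2 -h1s1; apply: mono_le.
- apply: panti.
  + by rewrite -h2s1 -h2s2; apply: mono_le => //; exact: ltnW.
  + by rewrite -h2s1; apply: mono_le.
Qed.
End Hist.

Lemma sum_bound (s : seq int) v : v \in s -> (`|v| <= \sum_(w <- s) `|w|)%N.
Proof.
elim: s => [|a s IH] //=; rewrite in_cons big_cons => /orP [/eqP ->|H].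
- exact: leq_addr.
- exact: leq_trans (IH H) (leq_addl _ _).
Qed.

Lemma exp_mono (a c e : nat) : (a <= c)%N -> (a ^ e <= c ^ e)%N.
Proof. move=> H; elim: e => // e IH; rewrite !expnS; exact: leq_mul. Qed.

Lemma block (F G : CA) (b : nat) (C : seq int)
  (phi : (nbhd C -> st G) -> 'I_b -> st F) (barphi : config G -> config F) :
  (0 < b)%N ->
  (forall (c : config G) (z : int) (r : 'I_b),
        barphi c (b%:Z * z + (nat_of_ord r)%:Z) = phi (@restr (st G) C c z) r) ->
  forall c c' q, @restr _ C c (q %/ b%:Z)%Z = @restr _ C c' (q %/ b%:Z)%Z ->
  barphi c q = barphi c' q.
Proof.
move=> Hb Hphi c c' q E.
have Hb0 : (b%:Z != 0) by lia.
have Hlt : (`|(q %% b%:Z)%Z| < b)%N.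
  have := modz_ge0 q Hb0; have : (0 < b%:Z) by lia.
  move=> /(ltz_pmod q) H1 H2; lia.
have Hq : q = b%:Z * (q %/ b%:Z)%Z + (nat_of_ord (Ordinal Hlt))%:Z.
  rewrite /= gez0_abs; last exact: modz_ge0.
  by rewrite mulrC -divz_eq.
by rewrite Hq !Hphi E.
Qed.

Theorem theorem9 :
  ~ exists F : CA, freezing F /\
      forall G : CA, nb G =i [:: -1; 0; 1] -> freezing G -> simulates F G.
Proof.
move=> [F [[le [[Hrefl [Hanti Htrans]] Hfr]] Huniv]].
pose r := (\sum_(v <- nb F) `|v|)%N.
have Hr : forall v, v \in nb F -> (`|v| <= r)%N by move=> v; exact: sum_bound.
pose PT := {ffun 'I_r -> st F}.
pose K := #|PT|. pose m := K.+1.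
have [T [b [C [phi [barphi [HT [Hb [HC0 [Hphi [Hinj Hcomm]]]]]]]]]] :=
  Huniv (Gm m) (fun _ => erefl) (Gm_freezing m).
pose R := (\sum_(v <- C) `|v|)%N.
have HR : forall v, v \in C -> (`|v| <= R)%N by move=> v; exact: sum_bound.
pose A := (T * (2*R+2) + 1)%N. pose L := (A ^ K).+1.
pose n := (L + 2*R + 1)%N. pose N := (T * n)%N.
pose p : int := (b * (R+1))%N%:Z.
pose ple (a c : PT) := forall i, le (a i) (c i).
have Hcomm_it : forall c t, barphi (iter t (@global (Gm m)) c) = iter (T * t) (@global F) (barphi c).
  move=> c; elim=> [|t IH]; first by rewrite muln0.
  by rewrite /= Hcomm IH mulnS iterD.
pose h (x : {ffun 'I_m -> 'I_L}) (s : nat) : PT :=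
  [ffun i : 'I_r => iter s (@global F) (barphi (stx x 0)) (p - r%:Z + (nat_of_ord i)%:Z)].
pose E (x : {ffun 'I_m -> 'I_L}) : {ffun PT -> 'I_N.+1} := [ffun v => inord (fh (h x) N v)].
have Hrefl' : forall a, ple a a by move=> a i.
have Hanti' : forall a c, ple a c -> ple c a -> a = c.
  by move=> a c H1 H2; apply/ffunP => i; apply: Hanti.
have Htrans' : forall a c d, ple a c -> ple c d -> ple a d.
  by move=> a c d H1 H2 i; apply: Htrans (H1 i) (H2 i).
have Einj : injective E.
  move=> x x' HE.
  have Hfh : forall v, fh (h x) N v = fh (h x') N v.
    move=> v; have := congr1 (fun f : {ffun PT -> 'I_N.+1} => nat_of_ord (f v)) HE; rewrite /E /= !ffunE.
    have Hs : forall y, (fh (h y) N v < N.+1)%N.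
      by move=> y; rewrite ltnS /fh -{2}(size_iota 0 N); exact: find_size.
    by rewrite !inordK.
  have Hmono : forall y s, ple (h y s.+1) (h y s).
    by move=> y s i; rewrite /h !ffunE /=; apply: Hfr.
  have Hh := hist_det Hrefl' Hanti' Htrans' (Hmono x) (Hmono x') Hfh.
  have Hbl := block Hb Hphi.
  have Hdiv0 : forall q : int, (b%:Z * divz q b%:Z <= q) && (q < b%:Z * divz q b%:Z + b%:Z).
    move=> q.
    have Hb0 : (b%:Z != 0) by lia.
    have H1 := modz_ge0 q Hb0.
    have : (0 < b%:Z) by lia.
    move=> /(ltz_pmod q) H2.
    have H3 := divz_eq q b%:Z.
    apply/andP; split; lia.
  have Hdiv1 : forall q : int, p <= q -> (R + 1)%N%:Z <= divz q b%:Z.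
    move=> q; have /andP[H1 H2] := Hdiv0 q; rewrite /p => Hq; nia.
  have Hdiv2 : forall q : int, q < p -> divz q b%:Z <= R%:Z.
    move=> q; have /andP[H1 H2] := Hdiv0 q; rewrite /p => Hq; nia.
  have R1 : forall q, p <= q -> barphi (stx x 0) q = barphi (stx x' 0) q.
    move=> q Hq; apply: Hbl; apply: functional_extensionality => -[v Hv].
    have := HR _ Hv; have := Hdiv1 q Hq => H1 H2.
    rewrite /restr /stx /=; apply/ffunP => j; rewrite !(@ffunE _ _ (fun j0 => _)) /sig.
    have -> : (0%:Z - (x j)%:Z < divz q b%:Z + v) by lia.
    have -> : (0%:Z - (x' j)%:Z < divz q b%:Z + v) by lia.
    by [].
  have S : forall s q, (s < N)%N -> p - r%:Z <= q -> q < p ->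
      iter s (@global F) (barphi (stx x 0)) q = iter s (@global F) (barphi (stx x' 0)) q.
    move=> s q Hs Hq1 Hq2.
    have Hi : (absz (q - (p - r%:Z))%R < r)%N by lia.
    have := congr1 (fun f : PT => f (Ordinal Hi)) (Hh s Hs).
    rewrite /h !ffunE /=.
    have -> : p - r%:Z + (absz (q - (p - r%:Z))%R)%:Z = q by lia.
    by [].
  have St := strip Hr R1 S.
  have Hn : forall y : {ffun 'I_m -> 'I_L}, barphi (stx y n) = iter N (@global F) (barphi (stx y 0)).
    by move=> y; rewrite (stx_iter y n) Hcomm_it.
  have Hb' : barphi (stx x n) = barphi (stx x' n).
    apply: functional_extensionality => q; case: (ltrP q p) => Hq.
    - apply: Hbl; apply: functional_extensionality => -[v Hv].
      have := HR _ Hv; have := Hdiv2 q Hq => H1 H2.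
      rewrite /restr /stx /=; apply/ffunP => j; rewrite !(@ffunE _ _ (fun j0 => _)) /sig.
      have Hxj := ltn_ord (x j). have Hxj' := ltn_ord (x' j).
      have -> : (n%:Z - (x j)%:Z < divz q b%:Z + v) = false by rewrite /n; lia.
      have -> : (n%:Z - (x' j)%:Z < divz q b%:Z + v) = false by rewrite /n; lia.
      have -> : (n%:Z - (x j)%:Z == divz q b%:Z + v) = false by rewrite /n; lia.
      have -> : (n%:Z - (x' j)%:Z == divz q b%:Z + v) = false by rewrite /n; lia.
      by [].
    - by rewrite !Hn; apply: St.
  have Hst := Hinj _ _ Hb'.
  apply/ffunP => j; apply: val_inj.
  have := congr1 (fun c : config (Gm m) => nat_of_ord (c (n%:Z - (x j)%:Z) j)) Hst.
  rewrite /stx /= !(@ffunE _ _ (fun j0 => _)) /sig ltxx eqxx.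
  case: ifP => _ //. case: ifP => [/eqP H _|_ //]. lia.
have := @leq_card _ _ E Einj; have HK : K = (#|st F| ^ r)%N by rewrite /K /PT card_ffun card_ord.
rewrite !card_ffun !card_ord -HK.
have HL : (0 < L)%N by [].
have H1 : (N.+1 <= A * L)%N by rewrite /N /n /A; nia.
have H2 : (N.+1 ^ K <= A ^ K * L ^ K)%N by rewrite -expnMn; exact: exp_mono.
have H3 : (A ^ K * L ^ K < L ^ m)%N.
  rewrite /m expnS ltn_pmul2r //; exact: expn_gt0.
move=> H; have := leq_trans H H2; rewrite leqNgt H3 //.
Qed.
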